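(* For every positive integer $n$, $$n^2-1\ \Big|\ \sum_{k=0}^{n-1}\binom{n-1}{k}\binom{-n-1}{k}C_k3^{n-1-k}a(n,k),$$ where $$a(n,k)=4k^2n^2-8kn^3-14k^2n-14kn^2-4n^3+13k^2-11kn-26n^2+39k+4n+26.$$
   Context: $C_k=\binom{2k}{k}/(k+1)$; $\binom{x}{k}=x(x-1)\cdots(x-k+1)/k!$ for any integer $x$. Divisibility by $0$ means the quantity equals $0$. *)

(* Defs.v *)
From mathcomp Require Import all_boot all_order all_algebra.
Set Implicit Arguments. Unset Strict Implicit. Unset Printing Implicit Defensive.
Import Order.TTheory GRing.Theory Num.Theory.
Local Open Scope ring_scope.

(* Generalized binomial coefficient for integer x:
   binomz x k = x(x-1)...(x-k+1)/k!  (the division is exact). *)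
Definition binomz (x : int) (k : nat) : int :=
  ((\prod_(i < k) (x - i%:Z)) %/ (k`!)%:Z)%Z.

Definition catalan (k : nat) : nat := ('C(k.*2, k) %/ k.+1)%N.

Definition a_nk (n k : int) : int :=
  4*k^+2*n^+2 - 8*k*n^+3 - 14*k^+2*n - 14*k*n^+2 - 4*n^+3 + 13*k^+2
  - 11*k*n - 26*n^+2 + 39*k + 4*n + 26.

(* Main.v *)
Require Import Defs.
From mathcomp Require Import all_boot all_order all_algebra.
From mathcomp Require Import ring zify.
Import GRing.Theory Num.Theory.
Local Open Scope ring_scope.

Lemma prod_nat (m k : nat) :
  \prod_(i < k) (m%:Z - i%:Z) = (k`!)%:Z * ('C(m, k))%:Z.
Proof.
elim: k => [|k IH]; first by rewrite big_ord0 fact0 bin0.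
rewrite big_ord_recr /= IH factS.
have H := mul_bin_left m k.
case: (leqP k m) => hk.
  rewrite subzn // -!PoszM; congr Posz.
  by rewrite -[RHS]mulnA [RHS]mulnCA H -mulnA (mulnC (m - k)%N).
rewrite bin_small // bin_small; last exact: ltnW.
by rewrite !mulr0 mul0r.
Qed.

Lemma binomz_nat (m k : nat) : binomz m%:Z k = ('C(m, k))%:Z.
Proof. by rewrite /binomz prod_nat mulKz // -lt0n fact_gt0. Qed.

Lemma prod_neg (n k : nat) :
  \prod_(i < k) (- n%:Z - 1 - i%:Z) = (k`!)%:Z * ((-1) ^+ k * ('C(n + k, k))%:Z).
Proof.
elim: k => [|k IH]; first by rewrite big_ord0 fact0 bin0 expr0 mul1r.
rewrite big_ord_recr /= IH factS.
have H := mul_bin_diag (n + k.+1) k.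
rewrite addnS /= in H.
have Hz : (k.+1)%:Z * ('C((n + k).+1, k.+1))%:Z = ((n + k).+1)%:Z * ('C(n + k, k))%:Z.
  by rewrite -!PoszM H.
rewrite addnS PoszM.
set C1 := ('C((n + k).+1, k.+1))%:Z.
have -> : (k.+1)%:Z * (k`!)%:Z * ((-1) ^+ k.+1 * C1)
  = (k`!)%:Z * (-1) ^+ k.+1 * ((k.+1)%:Z * C1) by ring.
rewrite /C1 Hz exprS.
have -> : ((n + k).+1)%:Z = n%:Z + k%:Z + 1 by rewrite -addn1 !PoszD.
ring.
Qed.

Lemma binomz_neg (n k : nat) :
  binomz (- n%:Z - 1) k = (-1) ^+ k * ('C(n + k, k))%:Z.
Proof. by rewrite /binomz prod_neg mulKz // -lt0n fact_gt0. Qed.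

Lemma term_dvd (n k : nat) : (0 < n)%N ->
  ((n%:Z ^+ 2 - 1) %| ('C(n.-1, k))%:Z * ('C(n + k, k))%:Z * a_nk n%:Z k%:Z)%Z.
Proof.
move=> hn.
case: k => [|j].
  rewrite addn0 !bin0.
  apply/dvdzP; exists (-2 * (2 * n%:Z + 13)).
  rewrite /a_nk; ring.
set P := 'C(n.-1, j.+1). set Q := 'C(n + j.+1, j.+1).
set P' := 'C(n.-1.-1, j). set Q' := 'C(n + j.+1, j).
have e1 : (j.+1)%:Z * P%:Z = (n%:Z - 1) * P'%:Z.
  rewrite -PoszM /P -mul_bin_diag PoszM.
  by rewrite -(prednK hn) /= subzn // subn1.
have e2 : (j.+1)%:Z * Q%:Z = (n%:Z + 1) * Q'%:Z.
  rewrite -PoszM /Q mul_bin_left PoszM.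
  congr (_ * _).
  by rewrite addnS -addSn addnK -addn1 PoszD.
apply/dvdzP.
set A := 4 * n%:Z ^+ 2 - 14 * n%:Z + 13.
set G := -8 * n%:Z ^+ 2 - 22 * n%:Z - 36.
set Hh := -2 * (2 * n%:Z + 13).
exists (P'%:Z * Q'%:Z * A + G * P%:Z * Q'%:Z + 3 * P'%:Z * Q%:Z + Hh * P%:Z * Q%:Z).
set k := (j.+1)%:Z.
have -> : P%:Z * Q%:Z * a_nk n%:Z k =
  (P'%:Z * Q'%:Z * A + G * P%:Z * Q'%:Z + 3 * P'%:Z * Q%:Z + Hh * P%:Z * Q%:Z) * (n%:Z ^+ 2 - 1)
  + (k * P%:Z - (n%:Z - 1) * P'%:Z) * (A * k * Q%:Z + 3 * (n%:Z + 1) * Q%:Z)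
  + (k * Q%:Z - (n%:Z + 1) * Q'%:Z) * (A * (n%:Z - 1) * P'%:Z + G * (n%:Z - 1) * P%:Z).
  rewrite /a_nk /A /G /Hh; ring.
by rewrite /k e1 e2 !subrr !mul0r !addr0.
Qed.

Theorem lemma3p3 (n : nat) (hn : (0 < n)%N) :
  ((n%:Z ^+ 2 - 1) %|
     \sum_(k < n) binomz (n.-1)%:Z k * binomz (- n%:Z - 1) k
        * (catalan k)%:Z * 3 ^+ (n.-1 - k) * a_nk n%:Z k%:Z)%Z.
Proof.
apply: (big_ind (fun x => ((n%:Z ^+ 2 - 1) %| x)%Z)).
- exact: dvdz0.
- by move=> x y; apply: rpredD.
move=> k _.
rewrite binomz_nat binomz_neg.
have := @term_dvd n k hn => /(dvdz_mull ((-1) ^+ k * (catalan k)%:Z * 3 ^+ (n.-1 - k))).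
congr (_ %| _)%Z; ring.
Qed.
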